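(* Let $x_0\in\mathbb{R}^2$, $r_0>0$, and let $E$ be a relatively closed subset of $B(x_0,r_0)$ such that $x_0\in E$, $\beta_E(x_0,r_0)\le1/32$, $E$ separates $B(x_0,r_0)$, and $\mathcal{H}^1(E)\le(2+1/8)r_0$. Then there exists a set $\Xi\subset(r_0/16,r_0)$ with $\mathcal{L}^1((r_0/16,r_0)\setminus\Xi)\le r_0/4$ such that for all $\rho\in\Xi$, the set $E\cap\partial B(x_0,\rho)$ consists of exactly two points at distance larger than $\rho$ from each other.
   Context: $B(x,r)$ is the open ball. $\beta_E(x_0,r_0)=r_0^{-1}\inf_\ell\sup_{y\in E\cap B(x_0,r_0)}\mathrm{dist}(y,\ell)$, infimum over lines through $x_0$ (attained); with $\nu$ a unit normal of a minimizing line and $D^\pm_t=\{z\in B(x_0,r_0):\pm(z-x_0)\cdot\nu>t\}$, $E$ separates $B(x_0,r_0)$ if $\beta:=\beta_E(x_0,r_0)\le1/2$ and $D^+_{\beta r_0}$, $D^-_{\beta r_0}$ lie in distinct connected components of $B(x_0,r_0)\setminus E$. *)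

(* Defs.v *)
(* The plane R^2 is modelled as R * R (product
   topology = Euclidean topology) with the Euclidean distance. *)
From HB Require Import structures.
From mathcomp Require Import all_boot all_order all_algebra.
From mathcomp Require Import all_classical all_reals all_analysis.
Set Implicit Arguments. Unset Strict Implicit. Unset Printing Implicit Defensive.
Import Order.TTheory GRing.Theory Num.Theory.
Import numFieldNormedType.Exports.
Local Open Scope classical_set_scope.
Local Open Scope ring_scope.

Notation pt R := (R * R)%type (only parsing).

Section Plane.
Variable R : realType.
Local Notation pt := (pt R).

Definition dot (p q : pt) : R := p.1 * q.1 + p.2 * q.2.
Definition psub (p q : pt) : pt := (p.1 - q.1, p.2 - q.2).
Definition eudist (p q : pt) : R := Num.sqrt (dot (psub p q) (psub p q)).

Definition oball (x : pt) (r : R) : set pt := [set y | eudist x y < r].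
Definition sphere (x : pt) (rho : R) : set pt := [set y | eudist x y = rho].

Definition rel_closed (E B : set pt) : Prop :=
  E `<=` B /\ exists F : set pt, closed F /\ E = F `&` B.

Definition unit_vec (nu : pt) : Prop := dot nu nu = 1.

(* r0 * (flatness wrt the line through x0 with unit normal nu):
   sup_{y in E cap B(x0,r0)} dist(y, line) *)
Definition line_width (E : set pt) (x0 : pt) (r0 : R) (nu : pt) : R :=
  sup [set `|dot (psub y x0) nu| | y in E `&` oball x0 r0].

Definition beta (E : set pt) (x0 : pt) (r0 : R) : R :=
  r0^-1 * inf [set line_width E x0 r0 nu | nu in unit_vec].

Definition Dplus (x0 : pt) (r0 : R) (nu : pt) (t : R) : set pt :=
  [set z | oball x0 r0 z /\ dot (psub z x0) nu > t].
Definition Dminus (x0 : pt) (r0 : R) (nu : pt) (t : R) : set pt :=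
  [set z | oball x0 r0 z /\ - dot (psub z x0) nu > t].

Definition separates (E : set pt) (x0 : pt) (r0 : R) : Prop :=
  beta E x0 r0 <= 2^-1 /\
  exists nu : pt, [/\ unit_vec nu,
    line_width E x0 r0 nu = beta E x0 r0 * r0 &
    let U := oball x0 r0 `\` E in
    let t := beta E x0 r0 * r0 in
    exists a b : pt,
      [/\ Dplus x0 r0 nu t `<=` connected_component U a,
          Dminus x0 r0 nu t `<=` connected_component U b &
          connected_component U a <> connected_component U b]].

(* diameter (0 for the empty set, possibly +oo) *)
Definition diam (A : set pt) : \bar R :=
  ereal_sup ([set 0%E] `|` [set (eudist p q)%:E | p in A & q in A]).

(* delta-approximating 1-dimensional Hausdorff measure (normalised so that
   H^1 agrees with length: omega_1 (diam/2)^1 = diam) *)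
Definition hausdorff1_delta (E : set pt) (delta : R) : \bar R :=
  ereal_inf [set (\sum_(0 <= i <oo) diam (C i))%E | C in
    [set C : nat -> set pt | E `<=` \bigcup_i C i /\
                             forall i, (diam (C i) <= delta%:E)%E]].

Definition hausdorff1 (E : set pt) : \bar R :=
  ereal_sup [set hausdorff1_delta E delta | delta in [set d : R | 0 < d]].

End Plane.

(* Main.v *)
Require Import Defs.
From HB Require Import structures.
From mathcomp Require Import all_boot all_order all_algebra.
From mathcomp Require Import all_classical all_reals all_analysis.
From mathcomp Require Import ring lra measurable_realfun.
Import Order.TTheory GRing.Theory Num.Theory.
Import numFieldNormedType.Exports.
Local Open Scope classical_set_scope.
Local Open Scope ring_scope.
Section Geo.
Variable R : realType.
Implicit Types p q : (R * R)%type.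

Lemma eudistE p q : eudist p q = Num.sqrt ((p.1 - q.1)^+2 + (p.2 - q.2)^+2).
Proof. by rewrite /eudist /dot /psub /= !expr2. Qed.

Lemma eudist_ge0 p q : 0 <= eudist p q.
Proof. exact: sqrtr_ge0. Qed.

Lemma eudist_sq p q : eudist p q ^+ 2 = (p.1 - q.1)^+2 + (p.2 - q.2)^+2.
Proof. by rewrite eudistE sqr_sqrtr // addr_ge0 // sqr_ge0. Qed.

Lemma eudistC p q : eudist p q = eudist q p.
Proof. by rewrite !eudistE; congr Num.sqrt; nra. Qed.

Lemma le_sq_ge0 (x y : R) : 0 <= x -> 0 <= y -> x ^+ 2 <= y ^+ 2 -> x <= y.
Proof. move=> x0 y0 h; rewrite -(ler_pXn2r (n:=2)) ?nnegrE //. Qed.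

Lemma lt_sq_ge0 (x y : R) : 0 <= x -> 0 <= y -> x ^+ 2 < y ^+ 2 -> x < y.
Proof. move=> x0 y0 h; rewrite -(ltr_pXn2r (n:=2)) ?nnegrE //. Qed.

Lemma eudist_triangle p q r : eudist p r <= eudist p q + eudist q r.
Proof.
apply: le_sq_ge0; rewrite ?addr_ge0 ?eudist_ge0 //.
have h1 := eudist_sq p q; have h2 := eudist_sq q r; have h3 := eudist_sq p r.
have g1 := eudist_ge0 p q; have g2 := eudist_ge0 q r.
set a := eudist p q in h1 g1 *; set b := eudist q r in h2 g2 *.
set u1 := p.1 - q.1 in h1; set u2 := p.2 - q.2 in h1.
set v1 := q.1 - r.1 in h2; set v2 := q.2 - r.2 in h2.
have cs : u1 * v1 + u2 * v2 <= a * b.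
  have hh : (u1 * v1 + u2 * v2) ^+ 2 <= (a * b) ^+ 2.
    rewrite exprMn h1 h2; have := sqr_ge0 (u1 * v2 - u2 * v1); nra.
  have [hn|hp] := lerP (u1 * v1 + u2 * v2) 0; first by nra.
  by apply: le_sq_ge0 => //; [exact: ltW | exact: mulr_ge0].
rewrite eudist_sq /=.
have -> : p.1 - r.1 = u1 + v1 by rewrite /u1 /v1; ring.
have -> : p.2 - r.2 = u2 + v2 by rewrite /u2 /v2; ring.
clearbody a b u1 u2 v1 v2. nra.
Qed.

Lemma eudist_eq0 p q : eudist p q = 0 -> p = q.
Proof.
move=> h; have := eudist_sq p q; rewrite h expr2 mulr0 => e.
have s1 := sqr_ge0 (p.1 - q.1); have s2 := sqr_ge0 (p.2 - q.2).
have e1 : p.1 - q.1 = 0.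
  by apply/eqP; rewrite -sqrf_eq0 eq_le sqr_ge0 andbT; lra.
have e2 : p.2 - q.2 = 0.
  by apply/eqP; rewrite -sqrf_eq0 eq_le sqr_ge0 andbT; lra.
by clear s1 s2; case: p q e1 e2 {h e} => [a b] [c d] /= /eqP; rewrite subr_eq0 => /eqP -> /eqP; rewrite subr_eq0 => /eqP ->.
Qed.

Lemma eudist_gt0 p q : p <> q -> 0 < eudist p q.
Proof.
move=> ne; rewrite lt_neqAle eudist_ge0 andbT; apply/eqP => h.
by apply: ne; apply: eudist_eq0.
Qed.

Lemma eudist_lip x0 p q : eudist x0 p - eudist x0 q <= eudist p q.
Proof. rewrite lerBlDr addrC (eudistC p q); exact: eudist_triangle. Qed.


Definition gam (x0 nu : R * R) (rho sg : R) (s : R) : R * R :=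
  (x0.1 + s * nu.1 + (- sg) * Num.sqrt (rho ^+ 2 - s ^+ 2) * nu.2,
   x0.2 + s * nu.2 + sg * Num.sqrt (rho ^+ 2 - s ^+ 2) * nu.1).

Lemma cont_gamma (x0 nu : R * R) (rho sg : R) : continuous (gam x0 nu rho sg).
Proof.
have cp : continuous (fun s : R => rho ^+ 2 - s ^+ 2).
  move=> s; apply: (@cvgB _ _ _ _ _ (fun _ => rho ^+ 2) (fun x : R => x ^+ 2)).
    exact: cvg_cst.
  rewrite expr2; apply: (@cvgM _ _ _ _ (fun x : R => x) (fun x : R => x)); exact: cvg_id.
have cw : continuous (fun s : R => Num.sqrt (rho ^+ 2 - s ^+ 2)).
  move=> s; have := continuous_comp (cp s) (@sqrt_continuous R _); exact.
have cl : forall a b c d : R, continuous (fun s : R => a + s * b + c * Num.sqrt (rho ^+ 2 - s ^+ 2) * d).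
  move=> a b c d s.
  apply: (@cvgD _ _ _ _ _ (fun s : R => a + s * b) (fun s => c * Num.sqrt (rho ^+ 2 - s ^+ 2) * d)).
    apply: (@cvgD _ _ _ _ _ (fun _ => a) (fun s : R => s * b)); first exact: cvg_cst.
    apply: (@cvgMr_tmp _ _ _ _ (fun s : R => s)); exact: cvg_id.
  apply: (@cvgMr_tmp _ _ _ _ (fun s : R => c * Num.sqrt (rho ^+ 2 - s ^+ 2))).
  apply: (@cvgMl_tmp _ _ _ _ (fun s : R => Num.sqrt (rho ^+ 2 - s ^+ 2))); exact: cw.
move=> s; have := cvg_pair (cl x0.1 nu.1 (- sg) nu.2 s) (cl x0.2 nu.2 sg nu.1 s).
exact.
Qed.

Lemma unitE (nu : R * R) : unit_vec nu -> nu.1 ^+ 2 + nu.2 ^+ 2 = 1.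
Proof. by rewrite /unit_vec /dot !expr2. Qed.

Lemma sq_eq_ge0 (x y : R) : 0 <= x -> 0 <= y -> x ^+ 2 = y ^+ 2 -> x = y.
Proof.
move=> x0 y0 e; apply/le_anti/andP; split; apply: le_sq_ge0 => //; by rewrite e.
Qed.

Lemma gam_dist x0 nu rho sg s : unit_vec nu -> sg ^+ 2 = 1 -> 0 <= rho ->
  s ^+ 2 <= rho ^+ 2 -> eudist x0 (gam x0 nu rho sg s) = rho.
Proof.
move=> /unitE u sg1 r0 srho; apply: sq_eq_ge0 => //; first exact: eudist_ge0.
rewrite eudist_sq /gam /=.
have w2 : Num.sqrt (rho ^+ 2 - s ^+ 2) ^+ 2 = rho ^+ 2 - s ^+ 2.
  by rewrite sqr_sqrtr // subr_ge0.
set w := Num.sqrt _ in w2 *.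
transitivity ((s ^+ 2 + sg ^+ 2 * w ^+ 2) * (nu.1 ^+ 2 + nu.2 ^+ 2)); first ring.
by rewrite u sg1 w2; ring.
Qed.

Lemma gam_dot x0 nu rho sg s : unit_vec nu ->
  dot (psub (gam x0 nu rho sg s) x0) nu = s.
Proof.
move=> /unitE u; rewrite /dot /psub /gam /=.
transitivity (s * (nu.1 ^+ 2 + nu.2 ^+ 2)); first ring.
by rewrite u mulr1.
Qed.

Lemma gam_ball x0 nu rho sg s r0 : unit_vec nu -> sg ^+ 2 = 1 -> 0 <= rho -> rho < r0 ->
  s ^+ 2 <= rho ^+ 2 -> oball x0 r0 (gam x0 nu rho sg s).
Proof. by move=> u sg1 r0' rr ss; rewrite /oball /= gam_dist. Qed.


Lemma dot_bound (x0 p nu : R * R) : unit_vec nu ->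
  (dot (psub p x0) nu) ^+ 2 <= eudist x0 p ^+ 2.
Proof.
move=> /unitE u; rewrite eudist_sq /dot /psub /=.
have := sqr_ge0 ((p.1 - x0.1) * nu.2 - (p.2 - x0.2) * nu.1).
have e : (x0.1 - p.1) ^+ 2 + (x0.2 - p.2) ^+ 2 =
   ((x0.1 - p.1) ^+ 2 + (x0.2 - p.2) ^+ 2) * (nu.1 ^+ 2 + nu.2 ^+ 2) by rewrite u mulr1.
rewrite e; nra.
Qed.

Lemma strip (E : set (R * R)) x0 (r0 : R) nu y : unit_vec nu -> 0 < r0 ->
  E y -> oball x0 r0 y -> `|dot (psub y x0) nu| <= line_width E x0 r0 nu.
Proof.
move=> u r0p Ey By; rewrite /line_width.
apply: ub_le_sup; last by exists y.
exists r0 => _ [z [Ez Bz] <-].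
apply: le_sq_ge0 => //; first exact: ltW.
rewrite real_normK ?num_real //.
have h := dot_bound x0 z nu u.
rewrite /oball /= in Bz.
have h2 : eudist x0 z ^+ 2 <= r0 ^+ 2.
  by rewrite ler_pXn2r // ?nnegrE ?eudist_ge0 // ltW.
exact: le_trans h h2.
Qed.


Lemma arc_hit (E : set (R * R)) x0 (r0 : R) nu t rho sg a b :
  unit_vec nu -> sg ^+ 2 = 1 -> 0 < rho -> t < rho -> rho < r0 ->
  Dplus x0 r0 nu t `<=` connected_component (oball x0 r0 `\` E) a ->
  Dminus x0 r0 nu t `<=` connected_component (oball x0 r0 `\` E) b ->
  connected_component (oball x0 r0 `\` E) a <> connected_component (oball x0 r0 `\` E) b ->
  exists s, s ^+ 2 <= rho ^+ 2 /\ E (gam x0 nu rho sg s).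
Proof.
move=> u sg1 rp trho rr0 Dp Dm neq.
apply: contrapT => hn.
set U := oball x0 r0 `\` E.
set A := gam x0 nu rho sg @` [set` `[- rho, rho]].
have Ac : connected A.
  apply: connected_continuous_connected.
    by apply/connected_intervalP; exact: interval_is_interval.
  by apply: continuous_subspaceT; exact: cont_gamma.
have AU : A `<=` U.
  move=> _ [s /= + <-]; rewrite in_itv /= => /andP [s1 s2].
  have ss : s ^+ 2 <= rho ^+ 2 by nra.
  split; first by apply: gam_ball => //; exact: ltW.
  by move=> Eg; apply: hn; exists s.
have rr : rho ^+ 2 <= rho ^+ 2 by [].
have rr' : (- rho) ^+ 2 <= rho ^+ 2 by rewrite sqrrN.
have Ap : A (gam x0 nu rho sg rho).
  by exists rho => //=; rewrite in_itv /= lexx andbT; nra.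
have Am : A (gam x0 nu rho sg (- rho)).
  by exists (- rho) => //=; rewrite in_itv /= lexx /=; nra.
have Dpg : Dplus x0 r0 nu t (gam x0 nu rho sg rho).
  split; first by apply: gam_ball => //; exact: ltW.
  by rewrite gam_dot.
have Dmg : Dminus x0 r0 nu t (gam x0 nu rho sg (- rho)).
  split; first by apply: gam_ball => //; exact: ltW.
  by rewrite gam_dot // opprK.
have e1 := same_connected_component (Dp _ Dpg).
have e2 := same_connected_component (Dm _ Dmg).
apply: neq; rewrite -/U in e1 e2 *; rewrite e1 e2.
apply: same_connected_component.
exact: (connected_component_max Ap AU Ac).
Qed.


Lemma two_points (E : set (R * R)) x0 (r0 : R) nu t rho a b :
  0 < r0 -> E `<=` oball x0 r0 -> unit_vec nu -> line_width E x0 r0 nu = t ->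
  t <= r0 / 32 ->
  Dplus x0 r0 nu t `<=` connected_component (oball x0 r0 `\` E) a ->
  Dminus x0 r0 nu t `<=` connected_component (oball x0 r0 `\` E) b ->
  connected_component (oball x0 r0 `\` E) a <> connected_component (oball x0 r0 `\` E) b ->
  r0 / 16 < rho -> rho < r0 ->
  exists y1 y2, [/\ E y1, E y2, eudist x0 y1 = rho, eudist x0 y2 = rho & rho < eudist y1 y2].
Proof.
move=> r0p EB u lw t32 Dp Dm neq r1 r2.
have rp : 0 < rho by apply: lt_trans r1; rewrite divr_gt0.
have trho : t < rho by apply: le_lt_trans t32 _; apply: le_lt_trans r1; lra.
have [s1 [ss1 E1]] := @arc_hit E x0 r0 nu t rho 1 a b u (expr1n _ _) rp trho r2 Dp Dm neq.
have sgm : (-1 : R) ^+ 2 = 1 by rewrite sqrrN expr1n.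
have [s2 [ss2 E2]] := @arc_hit E x0 r0 nu t rho (-1) a b u sgm rp trho r2 Dp Dm neq.
have st1 := @strip E x0 r0 nu _ u r0p E1 (EB _ E1); rewrite lw gam_dot // in st1.
have st2 := @strip E x0 r0 nu _ u r0p E2 (EB _ E2); rewrite lw gam_dot // in st2.
move: st1 st2; rewrite !ler_norml => /andP [st1 st1'] /andP [st2 st2'].
exists (gam x0 nu rho 1 s1), (gam x0 nu rho (-1) s2); split => //.
- by apply: gam_dist => //; [exact: expr1n | exact: ltW].
- by apply: gam_dist => //; exact: ltW.
apply: lt_sq_ge0; [exact: ltW | exact: eudist_ge0 |].
have /unitE un := u.
rewrite eudist_sq /gam /=.
have w1 : Num.sqrt (rho ^+ 2 - s1 ^+ 2) ^+ 2 = rho ^+ 2 - s1 ^+ 2.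
  by rewrite sqr_sqrtr // subr_ge0.
have w2 : Num.sqrt (rho ^+ 2 - s2 ^+ 2) ^+ 2 = rho ^+ 2 - s2 ^+ 2.
  by rewrite sqr_sqrtr // subr_ge0.
have g1 := sqrtr_ge0 (rho ^+ 2 - s1 ^+ 2).
have g2 := sqrtr_ge0 (rho ^+ 2 - s2 ^+ 2).
set W1 := Num.sqrt _ in w1 g1 *; set W2 := Num.sqrt _ in w2 g2 *.
rewrite [X in _ < X](_ : _ = (s1 - s2) ^+ 2 + (W1 + W2) ^+ 2); last first.
  transitivity ((s1 - s2) ^+ 2 * (nu.1 ^+ 2 + nu.2 ^+ 2) + (W1 + W2) ^+ 2 * (nu.1 ^+ 2 + nu.2 ^+ 2)).
    ring.
  by rewrite un !mulr1.
have tr : t < rho / 2 by lra.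
have t0 : 0 <= t by lra.
have q1 : s1 ^+ 2 <= t ^+ 2 by nra.
have q2 : s2 ^+ 2 <= t ^+ 2 by nra.
have q3 : t ^+ 2 < rho ^+ 2 / 4 by nra.
nra.
Qed.
End Geo.

Section Count.
Local Open Scope ereal_scope.
Variable R : realType.

Lemma count3 (F : nat -> \bar R) (i j k : nat) :
  (forall n, 0 <= F n) -> 1 <= F i -> 1 <= F j -> 1 <= F k ->
  i != j -> i != k -> j != k -> 3%:E <= \sum_(n <oo) F n.
Proof.
move=> F0 Fi Fj Fk ij ik jk.
set K := (maxn i (maxn j k)).+1.
apply: le_trans (nneseries_lim_ge K (fun n _ _ => F0 n)).
rewrite big_mkord.
have hi : (i < K)%N by rewrite /K ltnS leq_maxl.
have hj : (j < K)%N by rewrite /K ltnS (leq_trans (leq_maxl j k)) // leq_maxr.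
have hk : (k < K)%N by rewrite /K ltnS (leq_trans (leq_maxr j k)) // leq_maxr.
rewrite (bigD1 (Ordinal hi)) //= (bigD1 (Ordinal hj)) //= ?(negbTE ij) //;
  last by rewrite -(inj_eq val_inj) /= eq_sym.
rewrite (bigD1 (Ordinal hk)) //=; last first.
  by rewrite -!(inj_eq val_inj) /= eq_sym ik eq_sym jk.
have s0 : 0 <= \sum_(n < K | ((n != Ordinal hi) && (n != Ordinal hj)) && (n != Ordinal hk)) F n.
  by apply: sume_ge0 => n _; exact: F0.
have -> : 3%:E = 1 + (1 + (1 + 0)) :> \bar R by rewrite !EFinD; congr _%:E; rewrite addr0; lra.
by apply: leeD => //; apply: leeD => //; apply: leeD.
Qed.

Lemma count2 (F : nat -> \bar R) (i j : nat) :
  (forall n, 0 <= F n) -> 1 <= F i -> 1 <= F j ->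
  i != j -> 2%:E <= \sum_(n <oo) F n.
Proof.
move=> F0 Fi Fj ij.
set K := (maxn i j).+1.
apply: le_trans (nneseries_lim_ge K (fun n _ _ => F0 n)).
rewrite big_mkord.
have hi : (i < K)%N by rewrite /K ltnS leq_maxl.
have hj : (j < K)%N by rewrite /K ltnS leq_maxr.
rewrite (bigD1 (Ordinal hi)) //= (bigD1 (Ordinal hj)) //=;
  last by rewrite -(inj_eq val_inj) /= eq_sym.
have s0 : 0 <= \sum_(n < K | (n != Ordinal hi) && (n != Ordinal hj)) F n.
  by apply: sume_ge0 => n _; exact: F0.
have -> : 2%:E = 1 + (1 + 0) :> \bar R by rewrite !EFinD; congr _%:E; rewrite addr0; lra.
by apply: leeD => //; apply: leeD.
Qed.
End Count.
Section Meas.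
Variable R : realType.
Local Open Scope ereal_scope.
Variables (x0 : R * R) (r0 : R) (E : set (R * R)).
Hypothesis r0p : (0 < r0)%R.
Hypothesis EB : E `<=` oball x0 r0.
Hypothesis hH : hausdorff1 E <= ((2 + 8^-1) * r0)%:E.
Hypothesis TP : forall rho : R, (r0 / 16 < rho)%R -> (rho < r0)%R ->
  exists y1 y2, [/\ E y1, E y2, eudist x0 y1 = rho, eudist x0 y2 = rho & (rho < eudist y1 y2)%R].

Definition P3 (delta rho : R) := exists p q c, [/\ E p, E q, E c,
  [/\ eudist x0 p = rho, eudist x0 q = rho & eudist x0 c = rho] &
  [/\ (delta < eudist p q)%R, (delta < eudist p c)%R & (delta < eudist q c)%R]].

Let I : set R := [set` `](r0 / 16)%R, r0%R[].

Lemma diam_ge0 (C : set (R * R)) : 0 <= diam C.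
Proof. by apply: ereal_sup_ubound; left. Qed.

Lemma diam_ub (C : set (R * R)) p q : C p -> C q -> (eudist p q)%:E <= diam C.
Proof. by move=> Cp Cq; apply: ereal_sup_ubound; right; exists p => //; exists q. Qed.

Lemma cover_ex (delta eps : R) : (0 < delta)%R -> (0 < eps)%R ->
  exists C : nat -> set (R * R), [/\ E `<=` \bigcup_i C i,
     (forall i, diam (C i) <= delta%:E) &
     \sum_(0 <= i <oo) diam (C i) <= ((2 + 8^-1) * r0 + eps)%:E].
Proof.
move=> d0 e0.
have h1 : hausdorff1_delta E delta <= ((2 + 8^-1) * r0)%:E.
  apply: le_trans hH; apply: ereal_sup_ubound; by exists delta.
have h0 : 0 <= hausdorff1_delta E delta.
  apply: le_ereal_inf_tmp => _ [C _ <-].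
  by apply: nneseries_ge0 => n _ _; exact: diam_ge0.
have hf : hausdorff1_delta E delta \is a fin_num.
  by rewrite ge0_fin_numE // (le_lt_trans h1) // ltry.
have [_ [C [EC Cd] <-] hC] := lb_ereal_inf_adherent e0 hf.
exists C; split => //.
apply/ltW; apply: (lt_le_trans hC).
by rewrite EFinD leeD2r.
Qed.


Definition Aset (C : set (R * R)) : set R := [set eudist x0 p | p in C `&` E].
Definition Jset (C : set (R * R)) : set R := [set` `[inf (Aset C), sup (Aset C)]%R].

Lemma Aset_lb C : has_lbound (Aset C).
Proof. by exists 0%R => _ [p _ <-]; exact: eudist_ge0. Qed.

Lemma Aset_ub C : has_ubound (Aset C).
Proof. by exists r0 => _ [p [_ Ep] <-]; move: (EB _ Ep); rewrite /oball /= => /ltW. Qed.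

Lemma Jset_meas C : measurable (Jset C).
Proof. exact: measurable_itv. Qed.

Lemma Jset_hit C p : C p -> E p -> Jset C (eudist x0 p).
Proof.
move=> Cp Ep; rewrite /Jset /= in_itv /=; apply/andP; split.
  by apply: ge_inf; [exact: Aset_lb | exists p].
by apply: ub_le_sup; [exact: Aset_ub | exists p].
Qed.

Lemma Jset_len C (delta : R) : diam C <= delta%:E -> lebesgue_measure (Jset C) <= diam C.
Proof.
move=> Cd; rewrite /Jset lebesgue_measure_itv /=.
case: ifP => h; last exact: diam_ge0.
have [Ane|A0] := pselect (Aset C !=set0); last first.
  exfalso; move: h; have -> : Aset C = set0 by apply/seteqP; split => // x Ax; apply: A0; exists x.
  by rewrite sup0 inf0 lte_fin ltxx.
have D0 := diam_ge0 C.
have Df : diam C \is a fin_num by rewrite ge0_fin_numE // (le_lt_trans Cd) // ltry.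
rewrite -(fineK Df) -EFinB lee_fin.
set d := fine (diam C).
have hd : forall p q, C p -> E p -> C q -> E q -> (eudist x0 p - eudist x0 q <= d)%R.
  move=> p q Cp Ep Cq Eq; apply: (le_trans (@eudist_lip R x0 p q)).
  by rewrite -lee_fin /d fineK //; exact: diam_ub.
rewrite lerBlDr; apply: ge_sup => //.
move=> _ [p [Cp Ep] <-]; rewrite -lerBlDl.
apply: lb_le_inf => // _ [q [Cq Eq] <-].
by rewrite lerBlDl addrC -lerBlDl; exact: hd.
Qed.


Lemma ML (delta eps : R) : (0 < delta)%R -> (delta <= r0 / 16)%R -> (0 < eps)%R ->
  exists G : set R, [/\ measurable G, G `<=` I,
    (forall rho, I rho -> P3 delta rho -> G rho) &
    lebesgue_measure G <= (r0 / 4 + eps)%:E].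
Proof.
move=> d0 d16 e0.
have [C [EC Cd Csum]] := @cover_ex delta eps d0 e0.
pose J i := Jset (C i).
pose g : R -> \bar R := fun x => \sum_(i <oo) (\1_(J i) x : R)%:E.
have F0 : forall x n, 0 <= (\1_(J n) x : R)%:E :> \bar R.
  by move=> x n; rewrite lee_fin indicE.
have hit : forall p, E p -> exists i, C i p /\ J i (eudist x0 p).
  move=> p Ep; have [i _ Cip] := EC p Ep.
  by exists i; split => //; exact: Jset_hit.
have one : forall i x, J i x -> 1 <= (\1_(J i) x : R)%:E :> \bar R.
  by move=> i x Jx; rewrite indicE mem_set.
have far : forall i p q, C i p -> C i q -> (eudist p q <= delta)%R.
  move=> i p q Cp Cq; rewrite -lee_fin; apply: le_trans (Cd i).
  exact: diam_ub.
have g2 : forall x, I x -> 2%:E <= g x.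
  move=> x; rewrite /I /= in_itv /= => /andP [x1 x2].
  have [y1 [y2 [E1 E2 f1 f2 fy]]] := TP x x1 x2.
  have [i [Ci Ji]] := hit _ E1; have [j [Cj Jj]] := hit _ E2.
  rewrite f1 in Ji; rewrite f2 in Jj.
  apply: (@count2 R _ _ _ (F0 x) (one _ _ Ji) (one _ _ Jj)).
  apply/eqP => eij; subst j.
  have := far _ _ _ Ci Cj; lra.
have g3 : forall x, P3 delta x -> 3%:E <= g x.
  move=> x [p [q [c [Ep Eq Ec [fp fq fc] [dpq dpc dqc]]]]].
  have [i [Ci Ji]] := hit _ Ep; have [j [Cj Jj]] := hit _ Eq.
  have [k [Ck Jk]] := hit _ Ec.
  rewrite fp in Ji; rewrite fq in Jj; rewrite fc in Jk.
  apply: (@count3 R _ _ _ _ (F0 x) (one _ _ Ji) (one _ _ Jj) (one _ _ Jk)).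
  - by apply/eqP => e; subst j; have := far _ _ _ Ci Cj; lra.
  - by apply/eqP => e; subst k; have := far _ _ _ Ci Ck; lra.
  - by apply/eqP => e; subst k; have := far _ _ _ Cj Ck; lra.
have mI : measurable I by exact: measurable_itv.
have mJ : forall i, measurable (J i) by move=> i; exact: Jset_meas.
have mi : forall i, measurable_fun I (fun x => (\1_(J i) x : R)%:E).
  by move=> i; apply/measurable_EFinP; exact: measurable_indic.
have mg : measurable_fun I g.
  have := @ge0_emeasurable_sum _ _ R I (fun i x => (\1_(J i) x : R)%:E) xpredT
    (fun k x _ _ => F0 x k) (fun k _ => mi k).
  exact.
pose G := I `&` g @^-1` [set` Interval (BLeft (3%:E : \bar R)) (BRight +oo%E)].
have mG : measurable G by apply: mg => //; exact: emeasurable_itv.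
exists G; split => //.
  by move=> x [].
  move=> x Ix Px; split => //=.
  by rewrite in_itv /= leey andbT; exact: g3.
have i1 : \int[lebesgue_measure]_(x in I) g x = \sum_(i <oo) lebesgue_measure (J i `&` I).
  rewrite /g integral_nneseries //.
  by apply: eq_eseriesr => i _; rewrite integral_indic //; exact: mJ.
have i2 : \sum_(i <oo) lebesgue_measure (J i `&` I) <= \sum_(i <oo) diam (C i).
  apply: lee_nneseries => [i _ _|i _]; first exact: measure_ge0.
  apply: (le_trans _ (@Jset_len (C i) delta (Cd i))).
  apply: le_measure; rewrite ?inE; [apply: measurableI; [exact: mJ | exact: mI] | exact: mJ | by move=> x []].
have mG' : measurable_fun I (fun x => (\1_G x : R)%:E).
  by apply/measurable_EFinP; exact: measurable_indic.
have i3 : \int[lebesgue_measure]_(x in I) (2%:E + (\1_G x : R)%:E) =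
    2%:E * lebesgue_measure I + lebesgue_measure (G `&` I).
  rewrite ge0_integralD // integral_indic //.
  by rewrite integral_cst.
have i4 : \int[lebesgue_measure]_(x in I) (2%:E + (\1_G x : R)%:E) <=
          \int[lebesgue_measure]_(x in I) g x.
  apply: ge0_le_integral => //.
  - by move=> x _; apply: adde_ge0; rewrite lee_fin ?indicE.
  - by apply: emeasurable_funD => //; exact: measurable_cst.
  move=> x Ix; rewrite indicE; case: (boolP (x \in G)) => [/set_mem [_ /=]|_].
    by rewrite in_itv /= => /andP [h _]; apply: le_trans h; rewrite -EFinD lee_fin; lra.
  by rewrite /= adde0; exact: g2.
have lI : lebesgue_measure I = ((r0 - r0 / 16)%R)%:E.
  rewrite /I lebesgue_measure_itv /= lte_fin.
  have -> : (r0 / 16 < r0)%R by lra.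
  by rewrite EFinB.
have GI : G `&` I = G by apply/setIidPl => x [].
have fG : lebesgue_measure G \is a fin_num.
  have GleI : lebesgue_measure G <= lebesgue_measure I.
    by apply: le_measure; rewrite ?inE // => x [].
  rewrite ge0_fin_numE ?measure_ge0 //.
  by apply: (le_lt_trans GleI); rewrite lI ltry.
rewrite i1 in i4; have := le_trans i4 (le_trans i2 Csum).
rewrite i3 GI lI -(fineK fG) -!EFinM -EFinD !lee_fin => h.
lra.
Qed.


Lemma archi_inv (e : R) : (0 < e)%R -> exists N : nat, (((N.+1)%:R)^-1 < e)%R.
Proof.
move=> e0; exists (Num.truncn e^-1).
have h := truncnS_gt e^-1; move: h.
by rewrite invf_plt // posrE.
Qed.

Lemma inv_mono (N k : nat) : (N <= k)%N -> (((k.+1)%:R)^-1 <= ((N.+1)%:R)^-1 :> R)%R.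
Proof. by move=> Nk; rewrite lef_pV2 ?posrE // ler_nat ltnS. Qed.

Lemma P3_mono d1 d2 rho : (d1 <= d2)%R -> P3 d2 rho -> P3 d1 rho.
Proof.
move=> d12 [p [q [c [Ep Eq Ec fs [h1 h2 h3]]]]].
exists p, q, c; split => //; split; exact: le_lt_trans d12 _.
Qed.


Lemma finalH : exists H : set R, [/\ measurable H,
  (forall rho, I rho -> forall d, (0 < d)%R -> P3 d rho -> H rho) &
  lebesgue_measure H <= (r0 / 4)%:E].
Proof.
pose dl n := (r0 / 16 * ((n.+1)%:R)^-1)%R.
pose ep n := (((n.+1)%:R)^-1 : R)%R.
have dl0 n : (0 < dl n)%R by rewrite mulr_gt0 // ?divr_gt0 // invr_gt0 ltr0Sn.
have ep0 n : (0 < ep n)%R by rewrite invr_gt0 ltr0Sn.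
have ex : forall n, exists G, [/\ measurable G, G `<=` I,
    (forall rho, I rho -> P3 (dl n) rho -> G rho) &
    lebesgue_measure G <= (r0 / 4 + ep n)%:E].
  move=> n; apply: ML => //.
  rewrite /dl ger_pMr ?divr_gt0 //.
  by rewrite invf_le1 // ?ler1n // ltr0Sn.
have [G hG] := choice ex.
pose K n := \bigcap_m G (m + n)%N.
pose H := \bigcup_n K n.
have mG n : measurable (G n) by have [] := hG n.
have mK n : measurable (K n) by apply: bigcapT_measurable => m; exact: mG.
have mH : measurable H by apply: bigcupT_measurable => n; exact: mK.
have hK n : lebesgue_measure (K n) <= (r0 / 4)%:E.
  apply/lee_addgt0Pr => e e0.
  have [N hN] := @archi_inv e e0.
  have [_ _ _ hGN] := hG (N + n)%N.
  have KG : lebesgue_measure (K n) <= lebesgue_measure (G (N + n)%N).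
    by apply: le_measure; rewrite ?inE //; [exact: mK | exact: mG | move=> x; apply].
  apply: (le_trans KG); apply: (le_trans hGN).
  rewrite EFinD leeD2l // lee_fin; apply/ltW; apply: le_lt_trans hN.
  exact: (@inv_mono _ _ (leq_addr _ _)).
exists H; split => //.
  move=> rho Irho d d0 Pd.
  have q0 : (0 < d * 16 / r0)%R by rewrite divr_gt0 // mulr_gt0.
  have [N hN] := @archi_inv _ q0.
  exists N => // m _.
  have [_ _ hG3 _] := hG (m + N)%N.
  apply: hG3 => //; apply: (@P3_mono _ d _ _ Pd).
  rewrite /dl; apply: (@le_trans _ _ (r0 / 16 * ((N.+1)%:R)^-1 : R)%R).
    by rewrite ler_pM2l ?divr_gt0 //; exact: (@inv_mono _ _ (leq_addl _ _)).
  apply/ltW; rewrite -ltr_pdivlMl ?divr_gt0 //.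
  by move: hN; congr (_ < _)%R; rewrite invf_div; ring.
have ndK : nondecreasing_seq K.
  apply/nondecreasing_seqP => n; apply/subsetPset => x Kx k _.
  by rewrite addnS -addSn; apply: Kx.
have hc := nondecreasing_cvg_mu (mu := lebesgue_measure) mK mH ndK.
rewrite -(cvg_lim _ hc); last exact: ereal_hausdorff.
apply: lime_le; first by apply/cvg_ex; eexists; exact: hc.
by apply: nearW => n; exact: hK.
Qed.

End Meas.

Theorem lemma4p29 (R : realType) (x0 : pt R) (r0 : R) (E : set (pt R)) :
  0 < r0 ->
  rel_closed E (oball x0 r0) ->
  E x0 ->
  beta E x0 r0 <= 32^-1 ->
  separates E x0 r0 ->
  (hausdorff1 E <= ((2 + 8^-1) * r0)%:E)%E ->
  exists Xi : set R,
    [/\ Xi `<=` `](r0 / 16)%R, r0%R[%classic,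
        (lebesgue_measure (`](r0 / 16)%R, r0%R[%classic `\` Xi) <= (r0 / 4)%:E)%E &
        forall rho, Xi rho ->
          exists a b : pt R,
            E `&` sphere x0 rho = [set a; b] /\ eudist a b > rho].
Proof.
move=> r0p [EB _] Ex0 hb [_ [nu [u lw sep]]] hH.
move: sep => /= [a [b [Dp Dm neq]]].
set t := beta E x0 r0 * r0 in lw Dp Dm.
have t32 : t <= r0 / 32 by rewrite /t mulrC ler_pM2l.
have TP : forall rho : R, r0 / 16 < rho -> rho < r0 ->
  exists y1 y2, [/\ E y1, E y2, eudist x0 y1 = rho, eudist x0 y2 = rho & rho < eudist y1 y2].
  move=> rho r1 r2.
  exact: (@two_points R E x0 r0 nu t rho a b r0p EB u lw t32 Dp Dm neq r1 r2).
have [H [mH HP lH]] := @finalH R x0 r0 E r0p EB hH TP.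
exists (`](r0 / 16)%R, r0%R[%classic `\` H); split.
- by move=> x [].
- rewrite setDD; apply: le_trans lH.
  by apply: le_measure; rewrite ?inE //; apply: measurableI => //; exact: measurable_itv.
move=> rho [Ir nH].
have := Ir; rewrite /= in_itv /= => /andP [r1 r2].
have [y1 [y2 [E1 E2 f1 f2 d12]]] := TP rho r1 r2.
exists y1, y2; split => //.
apply/seteqP; split; last first.
  by move=> z /= [->|->]; split.
move=> z [Ez Sz]; rewrite /sphere /= in Sz.
have [->|n1] := pselect (z = y1); first by left.
have [->|n2] := pselect (z = y2); first by right.
exfalso; apply: nH.
have rp : 0 < rho by apply: lt_trans r1; rewrite divr_gt0.
have h12 : 0 < eudist y1 y2 by apply: lt_trans d12.
have h1z : 0 < eudist y1 z by apply: eudist_gt0 => e; apply: n1.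
have h2z : 0 < eudist y2 z by apply: eudist_gt0 => e; apply: n2.
pose d := Num.min (eudist y1 y2) (Num.min (eudist y1 z) (eudist y2 z)) / 2.
have d0 : 0 < d by rewrite divr_gt0 // !lt_min h12 h1z h2z.
apply: (HP rho Ir d d0).
exists y1, y2, z; split => //; split.
- have : Num.min (eudist y1 y2) (Num.min (eudist y1 z) (eudist y2 z)) <= eudist y1 y2 by rewrite ge_min lexx.
  rewrite /d; lra.
- have : Num.min (eudist y1 y2) (Num.min (eudist y1 z) (eudist y2 z)) <= eudist y1 z by rewrite !ge_min lexx orbT.
  rewrite /d; lra.
- have : Num.min (eudist y1 y2) (Num.min (eudist y1 z) (eudist y2 z)) <= eudist y2 z by rewrite !ge_min lexx !orbT.
  rewrite /d; lra.
Qed.
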